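(* Let $k$ be a positive integer and $G$ a graph. Let $P_1$ and $P_2$ be vertex-disjoint paths in $G$, and let $Q_1,\dots,Q_\ell$ be pairwise vertex-disjoint paths in $G$, each having one endpoint in $V(P_1)$ and the other in $V(P_2)$ and being internally disjoint from $V(P_1\cup P_2)$. If $\ell \ge 2 + 3c^* k\log k$, then $P_1\cup P_2\cup\bigcup_{i=1}^{\ell} Q_i$ contains at least $k$ pairwise vertex-disjoint cycles, each of which contains at least two of the paths $Q_1,\dots,Q_\ell$.
   Context: All graphs are finite and simple; logarithms are base 2. $c^*\ge 1$ is a fixed constant given by the Erdős–Pósa theorem: for every positive integer $k$, every graph contains either $k$ pairwise vertex-disjoint cycles or a set of at most $c^* k\log k$ vertices meeting every cycle. *)

(* Defs.v *)
From Stdlib Require Import Reals.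
From mathcomp Require Import all_boot.
Set Implicit Arguments. Unset Strict Implicit. Unset Printing Implicit Defensive.

Definition simple_graph (T : finType) (e : rel T) : Prop :=
  symmetric e /\ irreflexive e.

Section Graphs.
Variables (T : finType) (e : rel T).

Definition is_path (p : seq T) : bool :=
  if p is x :: s then uniq p && path e x s else false.

Definition path_edge (p : seq T) (x y : T) : bool :=
  ((x, y) \in zip p (behead p)) || ((y, x) \in zip p (behead p)).

Definition is_cycle (c : seq T) : bool :=
  [&& 2 < size c, uniq c & cycle e c].

Definition cycle_edge (c : seq T) (x y : T) : bool :=
  ((x, y) \in zip c (rot 1 c)) || ((y, x) \in zip c (rot 1 c)).

Definition cycle_in (H : T -> T -> bool) (c : seq T) : Prop :=
  is_cycle c /\ forall x y, cycle_edge c x y -> H x y.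

Definition cycle_contains_path (c : seq T) (q : seq T) : Prop :=
  {subset q <= c} /\ forall x y, path_edge q x y -> cycle_edge c x y.

Definition has_k_disjoint_cycles (k : nat) : Prop :=
  exists C : 'I_k -> seq T,
    (forall i, is_cycle (C i)) /\
    (forall i j, i != j -> [disjoint C i & C j]).

End Graphs.

Definition log2 (x : R) : R := Rdiv (ln x) (ln 2).

Definition erdos_posa_constant (c : R) : Prop :=
  forall (k : nat), 0 < k ->
  forall (T : finType) (e : rel T), simple_graph e ->
    has_k_disjoint_cycles e k \/
    exists S : {set T},
      Rle (INR #|S|) (Rmult (Rmult c (INR k)) (log2 (INR k))) /\
      forall C : seq T, is_cycle e C -> exists2 v, v \in C & v \in S.

(* Main.v *)
Require Import Defs.
From Stdlib Require Import Reals.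
From mathcomp Require Import all_boot.
From mathcomp Require Import zify.
From Stdlib Require Import Classical Lra.
Set Implicit Arguments. Unset Strict Implicit. Unset Printing Implicit Defensive.

Ltac fixatoms :=
  repeat match goal with
  | H : is_true (leq _ _) |- _ => revert H
  | H : _ = _ |- _ => revert H
  | H : ~ _ |- _ => revert H
  | H : _ \/ _ |- _ => revert H
  | H : _ /\ _ |- _ => revert H
  end;
  repeat match goal with H : _ |- _ => clear H end;
  repeat match goal with
  | |- context [@size ?A ?p] => let n := fresh "sz" in set n := @size A p; clearbody n
  | |- context [@index ?A ?x ?p] => let n := fresh "ix" in set n := @index A x p; clearbody n
  end; intros.
Ltac slia := fixatoms; lia.

Section SeqLemmas.
Variable T : finType.
Implicit Types (p c s : seq T) (x y v : T).

Lemma zipbP p x y : (x, y) \in zip p (behead p) ->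
  exists i, [/\ i.+1 < size p, x = nth x p i & y = nth x p i.+1].
Proof.
move/(nthP (x, y)) => [i]; rewrite size_zip size_behead => hi.
rewrite nth_zip_cond size_zip size_behead hi /=.
case=> hx hy; exists i; split; first by move: hi; set n := size p; slia.
  by rewrite hx.
have hi' : i.+1 < size p by move: hi; set n := size p; slia.
by rewrite -hy nth_behead (set_nth_default x).
Qed.

Lemma zipbI p i x0 : i.+1 < size p -> (nth x0 p i, nth x0 p i.+1) \in zip p (behead p).
Proof.
move=> hi; apply/(nthP (x0, x0)); exists i.
  by rewrite size_zip size_behead; slia.
by rewrite nth_zip_cond size_zip size_behead nth_behead /=; case: ifP => //; slia.
Qed.

Lemma zipb_idx p x y : uniq p -> (x, y) \in zip p (behead p) ->
  [/\ x \in p, y \in p & index y p = (index x p).+1].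
Proof.
move=> u /zipbP [i [hi -> ->]].
rewrite !mem_nth; try slia.
by rewrite !index_uniq //; slia.
Qed.

Lemma peP p x y : uniq p -> path_edge p x y ->
  [/\ x \in p, y \in p & (index y p = (index x p).+1 \/ index x p = (index y p).+1)].
Proof.
move=> u; rewrite /path_edge => /orP [] /(zipb_idx u) [h1 h2 h3]; split => //; tauto.
Qed.

Lemma peI p x y : x \in p -> y \in p -> index y p = (index x p).+1 -> path_edge p x y.
Proof.
move=> hx hy hi; rewrite /path_edge; apply/orP; left.
have hlt : (index x p).+1 < size p by rewrite -hi index_mem.
by have := zipbI x hlt; rewrite -hi !nth_index.
Qed.

Lemma pe_sym p x y : path_edge p x y = path_edge p y x.
Proof. by rewrite /path_edge orbC. Qed.

Lemma pe_nb2 p v y : uniq p -> path_edge p v y ->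
  y = nth v p (index v p).-1 \/ y = nth v p (index v p).+1.
Proof.
move=> u /(peP u) [hv hy [h|h]].
  by right; rewrite -h nth_index.
by left; rewrite h /= nth_index.
Qed.

Lemma pe_end p v y y' : uniq p -> path_edge p v y -> path_edge p v y' ->
  (index v p = 0 \/ index v p = (size p).-1) -> y = y'.
Proof.
move=> u /(peP u) [hv hy h1] /(peP u) [_ hy' h2] h.
have a1 := hy; rewrite -index_mem in a1.
have a2 := hy'; rewrite -index_mem in a2.
have a3 := hv; rewrite -index_mem in a3.
have e : index y p = index y' p by slia.
by rewrite -(nth_index y hy) -(nth_index y hy') e.
Qed.

Lemma pe_rel (e : rel T) x0 s x y : path e x0 s -> path_edge (x0 :: s) x y ->
  e x y \/ e y x.
Proof.
move=> /(pathP x0) hp; rewrite /path_edge => /orP [] /zipbP [i [hi -> ->]] /=;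
  rewrite /= in hi; have hi' : i < size s by slia.
  left; rewrite (set_nth_default x0 x) ?(set_nth_default x0 _ hi') /=; try slia.
  by apply: hp.
right; rewrite (set_nth_default x0 y) ?(set_nth_default x0 _ hi') /=; try slia.
by apply: hp.
Qed.

Lemma pe_mem p x y : uniq p -> path_edge p x y -> x \in p /\ y \in p.
Proof. by move=> u /(peP u) []. Qed.

Lemma next_nth_idx c x0 i : uniq c -> i < size c ->
  next c (nth x0 c i) = nth x0 c (i.+1 %% size c).
Proof.
move=> u hi; rewrite next_nth mem_nth //.
case: c u hi => [//|y0 c'] u hi.
rewrite index_uniq //=.
case: (ltnP i (size c')) => h.
  rewrite modn_small; last by slia.
  by rewrite (set_nth_default x0).
have -> : i = size c' by simpl in hi; slia.
by rewrite nth_default // modnn.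
Qed.

Lemma nth_rot1 c z i : i < size c -> nth z (rot 1 c) i = nth z c (i.+1 %% size c).
Proof.
case: c => [//|y0 c'] hi.
rewrite /rot /= drop0 take0 nth_cat; rewrite /= in hi.
case: (ltnP i (size c')) => h.
  by rewrite modn_small //; slia.
have -> : i = size c' by slia.
by rewrite subnn /= modnn.
Qed.

Lemma zipc_next c x y : uniq c ->
  ((x, y) \in zip c (rot 1 c)) = (x \in c) && (y == next c x).
Proof.
move=> u; case: c u => [//|y0 c'] u.
set c := y0 :: c'.
have hs : size c = size (rot 1 c) by rewrite size_rot.
apply/idP/idP.
  move/(nthP (x, y)) => [i]; rewrite size_zip -hs minnn => hi.
  rewrite nth_zip // => [[hx hy]].
  rewrite (set_nth_default y0) // in hx.
  rewrite (set_nth_default y0) -?hs // in hy.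
  subst x y.
  by rewrite mem_nth // next_nth_idx // nth_rot1 // eqxx.
move/andP => [hx /eqP ->].
apply/(nthP (x, x)); exists (index x c).
  by rewrite size_zip -hs minnn index_mem.
rewrite nth_zip // nth_index //; congr pair.
have hi : index x c < size c by rewrite index_mem.
by rewrite nth_rot1 //; have := next_nth_idx x u hi; rewrite nth_index // => ->.
Qed.

Lemma ceP c x y : uniq c -> cycle_edge c x y <->
  (x \in c /\ y = next c x) \/ (y \in c /\ x = next c y).
Proof.
move=> u; rewrite /cycle_edge !zipc_next //.
split.
  by move=> /orP [] /andP [h /eqP e]; [left|right].
by move=> [] [h e]; apply/orP; [left|right]; rewrite h e eqxx.
Qed.

Lemma modS k n : k < n -> k.+1 %% n = if k.+1 == n then 0 else k.+1.
Proof.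
move=> h; case: eqP => [->|ne]; first by rewrite modnn.
by rewrite modn_small //; slia.
Qed.

Lemma next_neq_prev c x : uniq c -> 2 < size c -> x \in c -> next c x != prev c x.
Proof.
move=> u hs hx; apply/negP => /eqP e.
have h1 : next c (next c x) = x by rewrite {1}e next_prev.
have hi : index x c < size c by rewrite index_mem.
have h2 := next_nth_idx x u hi; rewrite nth_index // in h2.
have hi2 : (index x c).+1 %% size c < size c by apply ltn_pmod; slia.
have h3 : x = nth x c (((index x c).+1 %% size c).+1 %% size c).
  by rewrite -(next_nth_idx x u hi2) -h2 h1.
have hi3 : ((index x c).+1 %% size c).+1 %% size c < size c by apply ltn_pmod; slia.
have := congr1 (fun z => index z c) h3; rewrite /= index_uniq //.
rewrite (modS hi2) (modS hi).
case: ((index x c).+1 =P size c) => h4 /=; case: ifP => /eqP h5; clear -hs h4 h5; slia.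
Qed.
End SeqLemmas.

Section Counting.
Variables (T : finType) (r : rel T).
Hypotheses (rsym : symmetric r) (rirr : irreflexive r).

Definition Dp (V : {set T}) :=
  #|[set p : T * T | [&& p.1 \in V, p.2 \in V & r p.1 p.2]]|.
Definition degV (V : {set T}) v := #|[set w in V | r v w]|.

Lemma Drem V v : Dp V <= Dp (V :\ v) + 2 * degV V v.
Proof.
set N := [set w in V | r v w].
set A := [set p : T * T | [&& p.1 \in V :\ v, p.2 \in V :\ v & r p.1 p.2]].
set B := [set (v, w) | w in N].
set C := [set (w, v) | w in N].
have sub : [set p : T * T | [&& p.1 \in V, p.2 \in V & r p.1 p.2]] \subset A :|: (B :|: C).
  apply/subsetP => [[a b]]; rewrite !inE /= => /and3P [ha hb hab].
  case: (a =P v) => [eav|nav].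
    subst a; apply/orP; right; apply/orP; left; apply/imsetP; exists b => //.
    by rewrite !inE hb hab.
  case: (b =P v) => [ebv|nbv].
    subst b; apply/orP; right; apply/orP; right; apply/imsetP; exists a => //.
    by rewrite !inE ha rsym hab.
  by apply/orP; left; rewrite /= ha hb hab.
have h1 := subset_leq_card sub.
have h2 := (leq_card_setU A (B :|: C)).1.
have h3 := (leq_card_setU B C).1.
have h4 : #|B| <= #|N| := leq_imset_card _ _.
have h5 : #|C| <= #|N| := leq_imset_card _ _.
rewrite /Dp /degV -/N -/A; lia.
Qed.

Lemma step (V : {set T}) (v : T) (p : seq T) : 1 < degV V v ->
  uniq (v :: p) -> {subset v :: p <= V} -> path r v p ->
  (exists c, is_cycle r c /\ {subset c <= V}) \/
  (exists w, [/\ w \notin v :: p, w \in V & r v w]).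
Proof.
move=> hd hu hs hp.
have [w1 [w2 [hw1 hw2 hne]]] : exists w1 w2, [/\ w1 \in [set w in V | r v w],
        w2 \in [set w in V | r v w] & w1 != w2].
  move: hd; rewrite /degV => hd.
  case: (set0Pn _ (_ : [set w in V | r v w] != set0)) => [|w1 hw1].
    by rewrite -card_gt0; slia.
  case: (set0Pn _ (_ : [set w in V | r v w] :\ w1 != set0)) => [|w2 hw2].
    by rewrite -card_gt0; have := cardsD1 w1 [set w in V | r v w]; rewrite hw1; slia.
  exists w1, w2; move: hw2; rewrite in_setD1 => /andP [h1 h2]; split => //; by rewrite eq_sym.
pose w := if w1 != head v p then w1 else w2.
have hwu : w != head v p by rewrite /w; case: ifP => // /negbFE /eqP <-; rewrite eq_sym.
have hw : w \in [set w in V | r v w] by rewrite /w; case: ifP.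
move: hw; rewrite inE => /andP [hwV hvw].
have hwv : w != v by apply/eqP => e; rewrite e rirr in hvw.
case: (boolP (w \in v :: p)) => hwp; last by right; exists w.
left.
rewrite inE (negbTE hwv) /= in hwp.
case/splitPr: hwp hu hs hp hwu => p1 p2 hu hs hp hwu.
exists (v :: rcons p1 w); split.
  rewrite /is_cycle; apply/and3P; split.
  - by case: p1 hwu {hu hs hp} => [|a p1] /=; [rewrite eqxx | rewrite size_rcons].
  - move: hu; rewrite -cats1 /= !mem_cat !cat_uniq /= !inE !orbF.
    move=> /andP [/norP [h1 /norP [h2 _]] /and4P [h3 h4 _ _]].
    move: h4; rewrite negb_or => /andP [h4 _].
    by rewrite (negbTE h1) h2 h3 h4.
  - rewrite /= rcons_path; move: hp; rewrite cat_path /= => /and3P [h1 h2 _].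
    by rewrite rcons_path h1 h2 last_rcons rsym.
move=> x; rewrite inE mem_rcons inE => /or3P [] hx; apply: hs.
- by rewrite inE hx.
- by rewrite inE mem_cat inE hx !orbT.
- by rewrite inE mem_cat hx orbT.
Qed.

Lemma grow (V : {set T}) : (forall v, v \in V -> 1 < degV V v) ->
  forall m (v : T) (p : seq T), #|V| - size (v :: p) <= m -> uniq (v :: p) ->
  {subset v :: p <= V} ->
  path r v p -> exists c, is_cycle r c /\ {subset c <= V}.
Proof.
move=> hdeg; elim=> [|m IH] v p hm hu hs hp;
  have hv : v \in V by apply: hs; rewrite inE eqxx.
all: case: (step (hdeg v hv) hu hs hp) => // [[w [hwp hwV hvw]]];
  have hsz : size (w :: v :: p) <= #|V| by
    (rewrite -(card_uniqP _); [apply: subset_leq_card; apply/subsetP => x;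
      rewrite inE => /orP [/eqP ->|] //; exact: hs | by rewrite cons_uniq hwp hu]).
  simpl in hsz, hm; slia.
apply: (IH w (v :: p)).
+ simpl in hm, hsz |- *; slia.
+ by rewrite cons_uniq hwp hu.
+ by move=> x; rewrite inE => /orP [/eqP ->|] //; exact: hs.
+ by rewrite /= rsym hvw hp.
Qed.

Lemma cycle_exists n (V : {set T}) : #|V| = n -> 0 < Dp V -> 2 * #|V| <= Dp V ->
  exists c, is_cycle r c /\ {subset c <= V}.
Proof.
elim: n V => [|n IH] V hV hD h2.
  move: hD; rewrite /Dp card_gt0 => /set0Pn [[a b]]; rewrite inE /= => /and3P [ha _ _].
  by move: hV; move/cards0_eq => e; rewrite e inE in ha.
case: (pickP (fun v => (v \in V) && (degV V v <= 1))) => [v /andP [hv hdv]|hno].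
  have hc := cardsD1 v V; rewrite hv in hc.
  have hr := Drem V v.
  have deg0 : #|V| <= 1 -> degV V v = 0.
    move=> hV1; apply/eqP; rewrite cards_eq0; apply/eqP/setP => w; rewrite !inE.
    apply/negbTE/negP => /andP [hw hvw].
    have : #|[set v; w]| <= #|V|.
      by apply: subset_leq_card; apply/subsetP => x; rewrite !inE => /orP [] /eqP ->.
    rewrite cards2; case: eqP => [e|_]; last by lia.
    by rewrite e rirr in hvw.
  have [|||c [hcy hsub]] := IH (V :\ v); first by lia.
  - case: (posnP (Dp (V :\ v))) => // h0.
    have : #|V| <= 1 by lia.
    move/deg0 => h; lia.
  - lia.
  by exists c; split => // x /hsub; rewrite inE => /andP [_ ->].
have hdeg : forall v, v \in V -> 1 < degV V v.
  by move=> v hv; have := hno v; rewrite hv /= => /negbT; rewrite -ltnNge.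
move: hD; rewrite /Dp card_gt0 => /set0Pn [[a b]]; rewrite inE /= => /and3P [ha _ _].
apply: (grow hdeg (m := #|V|) (v := a) (p := [::])) => //.
- by rewrite leq_subr.
- by move=> x; rewrite inE => /eqP ->.
Qed.

Lemma DremS (d : nat) : (forall (W : {set T}) v, degV W v <= d) ->
  forall n (V S : {set T}), #|V :&: S| = n -> Dp V <= Dp (V :\: S) + 2 * d * n.
Proof.
move=> hd; elim=> [|n IH] V S hn.
  have -> : V :\: S = V.
    apply/setP => x; rewrite !inE; case: (boolP (x \in V)) => hx; rewrite ?andbF ?andbT //.
    apply/negP => hxS; have : x \in V :&: S by rewrite inE hx hxS.
    by rewrite (cards0_eq hn) inE.
  lia.
have : 0 < #|V :&: S| by rewrite hn.
rewrite card_gt0 => /set0Pn [s hs].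
have hn' : #|V :&: (S :\ s)| = n.
  have := cardsD1 s (V :&: S); rewrite hs hn.
  have -> : (V :&: S) :\ s = V :&: (S :\ s).
    by apply/setP => x; rewrite !inE; case: (x == s); rewrite ?andbF.
  lia.
have h1 := IH V (S :\ s) hn'.
have h2 := Drem (V :\: (S :\ s)) s.
have h3 := hd (V :\: (S :\ s)) s.
have -> : V :\: S = (V :\: (S :\ s)) :\ s.
  move: hs; rewrite inE => /andP [_ hsS].
  apply/setP => x; rewrite !inE; case: (x =P s) => [->|_] /=; first by rewrite hsS.
  by [].
lia.
Qed.

End Counting.

Lemma djF (T : finType) (A B : seq T) x : [disjoint A & B] -> x \in A -> x \in B -> False.
Proof. by move=> h hA; rewrite (disjointFr h hA). Qed.

Lemma ce_sym (T : finType) (c : seq T) x y : cycle_edge c x y = cycle_edge c y x.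
Proof. by rewrite /cycle_edge orbC. Qed.

Lemma ce_mem (T : finType) (c : seq T) x y : uniq c -> cycle_edge c x y -> x \in c /\ y \in c.
Proof.
move=> u /(ceP _ _ u) [] [h ->]; by rewrite mem_next.
Qed.

Lemma ce_next (T : finType) (c : seq T) v y : uniq c -> v \in c ->
  y = next c v \/ y = prev c v -> cycle_edge c v y.
Proof.
move=> u hv [] ->; apply/(ceP _ _ u); first by left.
by right; rewrite mem_prev next_prev.
Qed.

Section Main.
Variables (T : finType) (e : rel T).
Hypothesis hG : simple_graph e.
Variables (P1 P2 : seq T).
Hypotheses (hP1 : is_path e P1) (hP2 : is_path e P2) (hP12 : [disjoint P1 & P2]).
Variables (l : nat) (Q : 'I_l -> seq T).
Hypotheses (hQpath : forall i, is_path e (Q i))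
  (hQdisj : forall i j, i != j -> [disjoint Q i & Q j])
  (hQends : forall i, exists x0,
      ((head x0 (Q i) \in P1) && (last x0 (Q i) \in P2)) \/
      ((head x0 (Q i) \in P2) && (last x0 (Q i) \in P1)))
  (hQint : forall i x0 v, v \in Q i -> (v \in P1) || (v \in P2) ->
      v = head x0 (Q i) \/ v = last x0 (Q i)).

Definition Hr : rel T := fun x y => [|| path_edge P1 x y, path_edge P2 x y
                        | [exists i, path_edge (Q i) x y]].

Lemma is_path_uniq p : is_path e p -> uniq p.
Proof. by case: p => //= x s /andP [/andP [h1 h2] _]; rewrite h1 h2. Qed.

Lemma is_path_pe p x y : is_path e p -> path_edge p x y -> e x y.
Proof.
case: p => //= x0 s /andP [_ hp] /(pe_rel hp) [] //.
by rewrite (proj1 hG).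
Qed.

Let uP1 := is_path_uniq hP1.
Let uP2 := is_path_uniq hP2.
Let uQ i := is_path_uniq (hQpath i).

Lemma Hr_e x y : Hr x y -> e x y.
Proof.
rewrite /Hr => /or3P [] h; first exact: is_path_pe hP1 h.
  exact: is_path_pe hP2 h.
by case/existsP: h => i; apply: is_path_pe (hQpath i).
Qed.

Lemma Hr_sym : symmetric Hr.
Proof.
move=> x y; rewrite /Hr pe_sym [path_edge P2 x y]pe_sym; congr [|| _, _ | _].
by apply/existsP/existsP => [] [i h]; exists i; rewrite pe_sym.
Qed.

Lemma Hr_irr : irreflexive Hr.
Proof. by move=> x; apply/negP => /Hr_e; rewrite (proj2 hG). Qed.

Lemma Qne i : Q i != [::].
Proof. by have := hQpath i; case: (Q i). Qed.

Lemma Qsize i : 1 < size (Q i).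
Proof.
have [x0 h] := hQends i.
case: (Q i) h (Qne i) => [|a [|b s]] //= h _.
by case: h => /andP [h1 h2]; [case: (djF hP12 h1 h2) | case: (djF hP12 h2 h1)].
Qed.

Lemma q_ends_side i (P : seq T) x0 : P = P1 \/ P = P2 ->
  head x0 (Q i) \in P -> last x0 (Q i) \in P -> False.
Proof.
have [z h] := hQends i.
have eh : head x0 (Q i) = head z (Q i) by case: (Q i) (Qne i).
have el : last x0 (Q i) = last z (Q i) by case: (Q i) (Qne i).
rewrite eh el; case=> -> h1 h2; case: h => /andP [h3 h4].
- exact: djF hP12 h2 h4.
- exact: djF hP12 h1 h3.
- exact: djF hP12 h3 h1.
- exact: djF hP12 h4 h2.
Qed.

Lemma qend i v : v \in Q i -> (v \in P1) || (v \in P2) ->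
  index v (Q i) = 0 \/ index v (Q i) = (size (Q i)).-1.
Proof.
move=> hv hp; case: (hQint v hv hp) => h.
  by left; rewrite {1}h -nth0 index_uniq //; have := Qsize i; slia.
right; rewrite {1}h -nth_last index_uniq //; have := Qsize i; slia.
Qed.

Lemma q_side_uniq i (P : seq T) v a : P = P1 \/ P = P2 ->
  v \in Q i -> a \in Q i -> v \in P -> a \in P -> v = a.
Proof.
move=> hP hv ha hvP haP.
have hvP' : (v \in P1) || (v \in P2) by case: hP => <-; rewrite hvP ?orbT.
have haP' : (a \in P1) || (a \in P2) by case: hP => <-; rewrite haP ?orbT.
have ev := nth_index v hv; have ea := nth_index v ha.
case: (qend hv hvP') => h1; case: (qend ha haP') => h2.
- by rewrite -ev -ea h1 h2.
- apply: False_ind; apply: (q_ends_side (i:=i) (x0:=v) hP).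
    by rewrite -nth0 -h1 ev.
  by rewrite -nth_last -h2 ea.
- apply: False_ind; apply: (q_ends_side (i:=i) (x0:=v) hP).
    by rewrite -nth0 -h2 ea.
  by rewrite -nth_last -h1 ev.
- by rewrite -ev -ea h1 h2.
Qed.

Lemma q_inner i v y : v \in Q i -> v \notin P1 -> v \notin P2 -> Hr v y -> path_edge (Q i) v y.
Proof.
move=> hv h1 h2; rewrite /Hr => /or3P [] h.
- by have [] := pe_mem uP1 h; rewrite (negbTE h1).
- by have [] := pe_mem uP2 h; rewrite (negbTE h2).
case/existsP: h => j hj; case: (i =P j) => [->//|/eqP ne].
have [hv' _] := pe_mem (uQ j) hj.
by case: (djF (hQdisj ne) hv hv').
Qed.


Lemma zipbP' (p : seq T) x y z : (x, y) \in zip p (behead p) ->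
  exists i, [/\ i.+1 < size p, x = nth z p i & y = nth z p i.+1].
Proof.
move/zipbP => [i [hi hx hy]]; exists i; split => //.
  by rewrite hx (set_nth_default z) //; slia.
by rewrite hy (set_nth_default z).
Qed.

Lemma cyc_nbr c v : is_cycle Hr c -> v \in c ->
  [/\ Hr v (next c v), Hr v (prev c v), next c v != prev c v, next c v \in c & prev c v \in c].
Proof.
move=> /and3P [hs uc hcy] hv; split.
- exact: next_cycle hcy hv.
- by rewrite Hr_sym; apply: prev_cycle hcy hv.
- exact: next_neq_prev.
- by rewrite mem_next.
- by rewrite mem_prev.
Qed.

Definition used c j := exists x y, cycle_edge c x y /\ path_edge (Q j) x y.

Lemma inner_ce c j z s : is_cycle Hr c -> 0 < s -> s < (size (Q j)).-1 ->
  nth z (Q j) s \in c -> forall y, path_edge (Q j) (nth z (Q j) s) y ->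
  cycle_edge c (nth z (Q j) s) y.
Proof.
move=> hc h0 hs hvc y hy.
have uc : uniq c by case/and3P: hc.
set v := nth z (Q j) s in hvc hy *.
have hsQ : s < size (Q j) by apply: (leq_trans hs); apply: leq_pred.
have hvQ : v \in Q j by rewrite mem_nth.
have hiv : index v (Q j) = s by rewrite index_uniq.
clearbody v.
have hnP : ~~ ((v \in P1) || (v \in P2)).
  apply/negP => hp; case: (qend hvQ hp); rewrite hiv => ee; subst s.
    by move: h0; rewrite ee.
  by move: hs; rewrite ee ltnn.
move: hnP; rewrite negb_or => /andP [n1 n2].
have [h1 h2 hne _ _] := cyc_nbr hc hvc.
have a1 := pe_nb2 (uQ j) (q_inner hvQ n1 n2 h1).
have a2 := pe_nb2 (uQ j) (q_inner hvQ n1 n2 h2).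
have a3 := pe_nb2 (uQ j) hy.
apply: ce_next => //.
move: hne; case: a1 => ->; case: a2 => ->; case: a3 => ->; rewrite ?eqxx //; tauto.
Qed.

Lemma used_ccp c j : is_cycle Hr c -> used c j -> cycle_contains_path c (Q j).
Proof.
move=> hc [x [y [hxy hpe]]].
have uc : uniq c by case/and3P: hc.
set q := Q j in hpe *.
have hn := Qsize j; rewrite -/q in hn.
pose E s := cycle_edge c (nth x q s) (nth x q s.+1).
have [t [ht hEt]] : exists t, t.+1 < size q /\ E t.
  move: hpe; rewrite /path_edge => /orP [] /(zipbP' x) [i [hi e1 e2]]; exists i; split => //.
    by rewrite /E -e1 -e2.
  by rewrite /E -e1 -e2 ce_sym.
have up : forall s, E s -> s.+2 < size q -> E s.+1.
  move=> s hE hs; rewrite /E.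
  apply: inner_ce => //; first by slia.
    by have [] := ce_mem uc hE.
  by rewrite /path_edge zipbI.
have down : forall s, E s.+1 -> s.+2 < size q -> E s.
  move=> s hE hs; rewrite /E ce_sym.
  apply: inner_ce => //; first by slia.
    by have [] := ce_mem uc hE.
  by rewrite pe_sym /path_edge zipbI //; slia.
have all : forall s, s.+1 < size q -> E s.
  move=> s hs; case: (leqP t s) => hts.
    have : forall d, t + d < (size q).-1 -> E (t + d).
      elim=> [|d IH] hd; first by rewrite addn0.
      rewrite addnS; apply: up; first by apply: IH; slia.
      slia.
    by move/(_ (s - t)); rewrite subnKC //; apply; slia.
  have : forall d, d <= t -> E (t - d).
    elim=> [|d IH] hd; first by rewrite subn0.
    have ee : t - d = (t - d.+1).+1 by slia.
    apply: down; first by rewrite -ee; apply: IH; slia.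
    slia.
  by move/(_ (t - s)); rewrite subKn //; [apply; slia | slia].
split.
  move=> v hv; have hi : index v q < size q by rewrite index_mem.
  case: (ltnP (index v q).+1 (size q)) => h.
    by have [] := ce_mem uc (all _ h); rewrite nth_index.
  have h' : (index v q).-1.+1 < size q by slia.
  have [_] := ce_mem uc (all _ h').
  have -> : (index v q).-1.+1 = index v q by slia.
  by rewrite nth_index.
move=> a b; rewrite /path_edge => /orP [] /(zipbP' x) [i [hi -> ->]].
  exact: all.
by rewrite ce_sym; apply: all.
Qed.

Lemma key (P c : seq T) (a : T) (R : pred T) : uniq P -> is_cycle Hr c ->
  (exists2 x, x \in c & x \in P) -> (forall y y', R y -> R y' -> y = y') ->
  (forall v, v \in c -> v \in P -> forall y, y = next c v \/ y = prev c v ->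
     path_edge P v y \/ (v = a /\ R y)) -> False.
Proof.
move=> uP hc [x hxc hxP] hR hall.
have uc : uniq c by case/and3P: hc.
have hs : 2 < size c by case/and3P: hc.
have ext : forall m, m \in c -> m \in P ->
    (forall y y', y \in c -> y' \in c -> path_edge P m y -> path_edge P m y' -> y = y') -> m = a.
  move=> m hm hmP huniq; have hn := next_neq_prev uc hs hm.
  case: (hall m hm hmP (next c m) (or_introl erefl)) => [h1|[-> _]//].
  case: (hall m hm hmP (prev c m) (or_intror erefl)) => [h2|[-> _]//].
  by rewrite (huniq _ _ _ _ h1 h2) ?mem_next ?mem_prev ?eqxx in hn.
have hx : (x \in c) && (x \in P) by rewrite hxc hxP.
case: (@arg_maxnP T x [pred v | (v \in c) && (v \in P)] (fun v => index v P) hx) => m /andP [hm hmP] hmax.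
case: (@arg_minnP T x [pred v | (v \in c) && (v \in P)] (fun v => index v P) hx) => m' /andP [hm' hmP'] hmin.
have ma : m = a.
  apply: ext => // y y' hy hy' /(peP uP) [_ yP h1] /(peP uP) [_ yP' h2].
  have := hmax y; rewrite /= hy yP => /(_ isT) => i1.
  have := hmax y'; rewrite /= hy' yP' => /(_ isT) => i2.
  have ee : index y P = index y' P by slia.
  by rewrite -(nth_index y yP) -(nth_index y yP') ee.
have ma' : m' = a.
  apply: ext => // y y' hy hy' /(peP uP) [_ yP h1] /(peP uP) [_ yP' h2].
  have := hmin y; rewrite /= hy yP => /(_ isT) => i1.
  have := hmin y'; rewrite /= hy' yP' => /(_ isT) => i2.
  have ee : index y P = index y' P by slia.
  by rewrite -(nth_index y yP) -(nth_index y yP') ee.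
subst m m'.
have only : forall v, v \in c -> v \in P -> v = a.
  move=> v hv hvP.
  have := hmax v; rewrite /= hv hvP => /(_ isT) => i1.
  have := hmin v; rewrite /= hv hvP => /(_ isT) => i2.
  have ee : index v P = index a P by slia.
  by rewrite -(nth_index v hvP) -(nth_index v hmP) ee.
have noP : forall y, y \in c -> path_edge P a y -> False.
  move=> y hy /(peP uP) [_ yP hi]; have := only y hy yP => ee; subst y; slia.
have hn := next_neq_prev uc hs hm.
case: (hall a hm hmP (next c a) (or_introl erefl)) => [h1|[_ r1]].
  by apply: (noP _ _ h1); rewrite mem_next.
case: (hall a hm hmP (prev c a) (or_intror erefl)) => [h2|[_ r2]].
  by apply: (noP _ _ h2); rewrite mem_prev.
by rewrite (hR _ _ r1 r2) eqxx in hn.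
Qed.


Lemma cyc_two c : is_cycle Hr c ->
  exists i j, i != j /\ cycle_contains_path c (Q i) /\ cycle_contains_path c (Q j).
Proof.
move=> hc.
have uc : uniq c by case/and3P: hc.
have hs : 2 < size c by case/and3P: hc.
case: (classic (exists i j, i != j /\ used c i /\ used c j)) => [[i [j [hij [hi hj]]]]|hno].
  by exists i, j; split => //; split; apply: used_ccp.
have one : forall i j, used c i -> used c j -> i = j.
  move=> i j hi hj; case: (eqVneq i j) => // hne; case: hno; by exists i, j.
have nbr : forall v y, v \in c -> y = next c v \/ y = prev c v -> Hr v y /\ cycle_edge c v y.
  move=> v y hv hy; split; last exact: ce_next.
  by have [h1 h2 _ _ _] := cyc_nbr hc hv; case: hy => ->.
case: (classic (exists i, used c i)) => [[i hi]|none].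
  have hccp := used_ccp hc hi.
  have [a [haQ haP1]] : exists a, a \in Q i /\ a \in P1.
    have [x0 h] := hQends i; move: (Qne i) h; case: (Q i) => // a0 s _ /= h.
    case: h => /andP [h1 h2].
      by exists a0; rewrite mem_head.
    by exists (last a0 s); rewrite mem_last.
  exfalso; apply: (@key P1 c a [pred y | path_edge (Q i) a y] uP1 hc).
  - by exists a => //; apply: hccp.1.
  - move=> y y' hy hy'; apply: (pe_end (uQ i) hy hy'); apply: qend haQ _; by rewrite haP1.
  - move=> v hv hvP y hy; have [hH hce] := nbr v y hv hy.
    move: hH; rewrite /Hr => /or3P [] h; first by left.
      have [hv2 _] := pe_mem uP2 h; case: (djF hP12 hvP hv2).
    case/existsP: h => k hk.
    have hu : used c k by exists v, y.
    have ek := one _ _ hi hu; subst k.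
    have [hvQ _] := pe_mem (uQ i) hk.
    have eva : v = a by exact: (@q_side_uniq i P1 v a (or_introl erefl)).
    by right; split; [exact: eva | rewrite /= -eva].
have none' : forall k, ~ used c k by move=> k hk; apply: none; exists k.
have [v0 hv0] : exists v0, v0 \in c by case: (c) hs => // v0 s _; exists v0; rewrite mem_head.
have gen : forall P P', uniq P -> uniq P' -> [disjoint P & P'] ->
    (forall v y, Hr v y -> [\/ path_edge P v y, path_edge P' v y | exists k, path_edge (Q k) v y]) ->
    v0 \in P -> False.
  move=> P P' uP uP' dj hsplit hv0P.
  apply: (@key P c v0 pred0 uP hc); first by exists v0.
    by [].
  move=> v hv hvP y hy; have [hH hce] := nbr v y hv hy.
  case: (hsplit v y hH) => [h|h|[k hk]]; first by left.
    have [hv2 _] := pe_mem uP' h; case: (djF dj hvP hv2).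
  by case: (none' k); exists v, y.
exfalso; have [hH _] := nbr v0 (next c v0) hv0 (or_introl erefl).
move: hH; rewrite {1}/Hr => /or3P [] h.
- apply: (gen P1 P2 uP1 uP2 hP12 _ (pe_mem uP1 h).1).
  move=> v y; rewrite /Hr => /or3P [] h'; [exact: Or31 | exact: Or32 | by apply: Or33; apply/existsP].
- have dj21 : [disjoint P2 & P1] by rewrite disjoint_sym.
  apply: (gen P2 P1 uP2 uP1 dj21 _ (pe_mem uP2 h).1).
  move=> v y; rewrite /Hr => /or3P [] h'; [exact: Or32 | exact: Or31 | by apply: Or33; apply/existsP].
- case/existsP: h => k hk; case: (none' k); exists v0, (next c v0); split => //.
  by apply: ce_next => //; left.
Qed.


Definition inner (q : seq T) := take (size q - 2) (drop 1 q).
Definition EPs (p : seq T) := zip p (behead p) ++ zip (behead p) p.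
Definition Wseq := P1 ++ P2 ++ flatten [seq inner (Q i) | i <- enum 'I_l].
Definition Lseq := EPs P1 ++ EPs P2 ++ flatten [seq EPs (Q i) | i <- enum 'I_l].
Definition Vset := [set v | v \in Wseq].

Lemma zip_swap (s t : seq T) x y : ((x, y) \in zip s t) = ((y, x) \in zip t s).
Proof.
elim: s t => [|a s IH] [|b t] //=; rewrite !inE IH; congr orb.
by apply/eqP/eqP => [[-> ->]|[-> ->]].
Qed.

Lemma EPs_pe p x y : ((x, y) \in EPs p) = path_edge p x y.
Proof. by rewrite /EPs mem_cat /path_edge [(x, y) \in zip (behead p) p]zip_swap. Qed.

Lemma uniq_EPs p : uniq p -> uniq (EPs p).
Proof.
move=> u; rewrite /EPs cat_uniq zip_uniql // zip_uniqr //= andbT.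
apply/hasPn => [[x y]] h2; apply/negP => h1.
move: h2; rewrite zip_swap => h2.
have [_ _ i1] := zipb_idx u h1.
have [_ _ i2] := zipb_idx u h2.
slia.
Qed.

Lemma size_EPs p : size (EPs p) = (size p).-1 + (size p).-1.
Proof. rewrite /EPs size_cat !size_zip size_behead; slia. Qed.

Lemma size_inner q : size (inner q) = size q - 2.
Proof. rewrite /inner size_take size_drop; case: ifP => h //; slia. Qed.

Lemma inner_mem q v : v \in q -> index v q != 0 -> index v q != (size q).-1 -> v \in inner q.
Proof.
move=> hv /eqP h0 /eqP h1; have hi : index v q < size q by rewrite index_mem.
rewrite -(nth_index v hv).
have -> : nth v q (index v q) = nth v (inner q) (index v q).-1.
  by rewrite /inner nth_take; [rewrite nth_drop; congr nth; slia | slia].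
by apply: mem_nth; rewrite size_inner; slia.
Qed.

Lemma mem_inner q v : v \in inner q -> v \in q.
Proof. by rewrite /inner => /mem_take /mem_drop. Qed.

Lemma ends_P i x0 : ((head x0 (Q i) \in P1) || (head x0 (Q i) \in P2)) /\
                    ((last x0 (Q i) \in P1) || (last x0 (Q i) \in P2)).
Proof.
have [z h] := hQends i.
have eh : head x0 (Q i) = head z (Q i) by case: (Q i) (Qne i).
have el : last x0 (Q i) = last z (Q i) by case: (Q i) (Qne i).
rewrite eh el; case: h => /andP [-> ->]; by rewrite ?orbT.
Qed.

Lemma qW i v : v \in Q i -> v \in Wseq.
Proof.
move=> hv; rewrite /Wseq !mem_cat.
case: (boolP (v \in P1)) => // n1; case: (boolP (v \in P2)) => // n2 /=.
apply/flattenP; exists (inner (Q i)); first by apply/mapP; exists i; rewrite ?mem_enum.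
apply: inner_mem => //.
  apply/eqP => h; have := (ends_P i v).1; rewrite -nth0 -h nth_index //.
  by rewrite (negbTE n1) (negbTE n2).
apply/eqP => h; have := (ends_P i v).2; rewrite -nth_last -h nth_index //.
by rewrite (negbTE n1) (negbTE n2).
Qed.

Lemma uniq_flatten_map (I U : eqType) (f : I -> seq U) (s : seq I) : uniq s ->
  (forall i, i \in s -> uniq (f i)) ->
  (forall i j z, i \in s -> j \in s -> i != j -> z \in f i -> z \in f j -> False) ->
  uniq (flatten (map f s)).
Proof.
elim: s => [//|a s IH] /= /andP [ha hs] hu hd.
rewrite cat_uniq hu ?mem_head //= IH //; last first.
- by move=> i j z hi hj; apply: hd; rewrite inE ?hi ?hj orbT.
- by move=> i hi; apply: hu; rewrite inE hi orbT.
rewrite andbT; apply/hasPn => z /flattenP [t /mapP [j hj ->] hz]; apply/negP => hz'.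
apply: (hd a j z) => //; first by rewrite mem_head.
  by rewrite inE hj orbT.
by apply/negP => /eqP ea; subst j; rewrite hj in ha.
Qed.

Lemma noedge_PQ i P x y : P = P1 \/ P = P2 -> path_edge P x y -> path_edge (Q i) x y -> False.
Proof.
move=> hP h1 h2.
have uP : uniq P by case: hP => ->.
have [hx hy] := pe_mem uP h1; have [hx' hy'] := pe_mem (uQ i) h2.
have exy := q_side_uniq hP hx' hy' hx hy; subst y.
have [_ _ ] := peP uP h1; slia.
Qed.

Lemma uniq_L : uniq Lseq.
Proof.
have dj : forall s t : seq (T * T), (forall x y, (x, y) \in s -> (x, y) \in t -> False) ->
    ~~ has (in_mem^~ (mem s)) t.
  move=> s t h; apply/hasPn => [[x y]] ht; apply/negP => hs; exact: h x y hs ht.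
have hQQ : forall i j z, i \in enum 'I_l -> j \in enum 'I_l -> i != j ->
    z \in EPs (Q i) -> z \in EPs (Q j) -> False.
  move=> i j [x y] _ _ hij; rewrite !EPs_pe => h1 h2.
  have [hx _] := pe_mem (uQ i) h1; have [hx' _] := pe_mem (uQ j) h2.
  exact: djF (hQdisj hij) hx hx'.
rewrite /Lseq cat_uniq uniq_EPs // cat_uniq uniq_EPs // uniq_flatten_map ?enum_uniq //; last first.
  by move=> i _; apply: uniq_EPs.
rewrite /= andbT; apply/andP; split; last first.
  apply/hasPn => [[x y]] /flattenP [s /mapP [i _ ->]] h2; apply/negP => h1.
  rewrite !EPs_pe in h1 h2.
  exact: noedge_PQ (or_intror erefl) h1 h2.
rewrite has_cat negb_or; apply/andP; split.
  apply/hasPn => [[x y]] h2; apply/negP => h1; rewrite !EPs_pe in h1 h2.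
  have [hx _] := pe_mem uP1 h1; have [hx' _] := pe_mem uP2 h2.
  exact: djF hP12 hx hx'.
apply/hasPn => [[x y]] /flattenP [s /mapP [i _ ->]] h2; apply/negP => h1.
rewrite !EPs_pe in h1 h2.
exact: noedge_PQ (or_introl erefl) h1 h2.
Qed.

Lemma L_in x y : (x, y) \in Lseq -> [/\ x \in Vset, y \in Vset & Hr x y].
Proof.
rewrite /Vset !inE /Lseq mem_cat => /orP [h|]; last rewrite mem_cat => /orP [h|h].
- rewrite EPs_pe in h; have [hx hy] := pe_mem uP1 h.
  by rewrite ?inE /Wseq !mem_cat hx hy /Hr h.
- rewrite EPs_pe in h; have [hx hy] := pe_mem uP2 h.
  by rewrite ?inE /Wseq !mem_cat hx hy /Hr h !orbT.
move/flattenP: h => [s /mapP [i _ ->]]; rewrite EPs_pe => h.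
have [hx hy] := pe_mem (uQ i) h.
split; [exact: qW hx | exact: qW hy |].
by rewrite /Hr; apply/orP; right; apply/orP; right; apply/existsP; exists i.
Qed.

Lemma D_ge : size Lseq <= Dp Hr Vset.
Proof.
rewrite -(card_uniqP uniq_L) /Dp; apply: subset_leq_card; apply/subsetP => [[x y]] h.
by have [hx hy hxy] := L_in h; rewrite inE /= hx hy hxy.
Qed.

Lemma V_le : #|Vset| <= size Wseq.
Proof.
have -> : #|Vset| = #|Wseq| by apply: eq_card => x; rewrite inE.
exact: card_size.
Qed.

Lemma sum_rel (s : seq 'I_l) : sumn [seq size (EPs (Q i)) | i <- s] =
  2 * sumn [seq size (inner (Q i)) | i <- s] + 2 * size s.
Proof.
elim: s => [//|a s IH] /=; rewrite IH size_EPs size_inner.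
have := Qsize a; slia.
Qed.

Lemma size_LW : size Lseq + 4 = 2 * size Wseq + 2 * l.
Proof.
have eL : size Lseq = size (EPs P1) + (size (EPs P2) + sumn [seq size (EPs (Q i)) | i <- enum 'I_l]).
  rewrite /Lseq [size (EPs P1 ++ _)]size_cat [size (EPs P2 ++ _)]size_cat size_flatten /shape.
  by rewrite -map_comp.
have eW : size Wseq = size P1 + (size P2 + sumn [seq size (inner (Q i)) | i <- enum 'I_l]).
  rewrite /Wseq !size_cat size_flatten /shape.
  by rewrite -map_comp.
rewrite eL eW sum_rel size_enum_ord !size_EPs.
have h1 : 0 < size P1 by case: (P1) hP1.
have h2 : 0 < size P2 by case: (P2) hP2.
slia.
Qed.


Definition nb2 (p : seq T) v := [:: nth v p (index v p).-1; nth v p (index v p).+1].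
Definition qnb (k : 'I_l) v :=
  if (v \in P1) || (v \in P2) then
    [:: if index v (Q k) == 0 then nth v (Q k) 1 else nth v (Q k) (index v (Q k)).-1]
  else nb2 (Q k) v.
Definition nbl v :=
  (if v \in P1 then nb2 P1 v else if v \in P2 then nb2 P2 v else [::]) ++
  (if [pick k | v \in Q k] is Some k then qnb k v else [::]).

Lemma nbl_size v : size (nbl v) <= 3.
Proof.
rewrite /nbl size_cat /qnb; case: pickP => [k _|_];
  case: (boolP (v \in P1)) => h1; case: (boolP (v \in P2)) => h2 //=.
Qed.

Lemma in_nb2 p v w : uniq p -> path_edge p v w -> w \in nb2 p v.
Proof. by move=> u h; rewrite !inE; case: (pe_nb2 u h) => ->; rewrite eqxx ?orbT. Qed.

Lemma nbl_mem v w : Hr v w -> w \in nbl v.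
Proof.
rewrite /Hr /nbl mem_cat => /or3P [] h.
- have [hv _] := pe_mem uP1 h.
  by rewrite hv in_nb2.
- have [hv _] := pe_mem uP2 h.
  have n1 : v \notin P1 by apply/negP => h1; exact: djF hP12 h1 hv.
  by rewrite (negbTE n1) hv in_nb2.
case/existsP: h => k hk; have [hv hw] := pe_mem (uQ k) hk.
apply/orP; right; case: pickP => [k' hk'|none]; last by have := none k; rewrite hv.
have ek : k' = k by case: (eqVneq k' k) => // ne; case: (djF (hQdisj ne) hk' hv).
subst k'; rewrite /qnb; case: ifP => hp; last exact: in_nb2.
have [_ _ hi] := peP (uQ k) hk.
have hwi : index w (Q k) < size (Q k) by rewrite index_mem.
have hs := Qsize k.
rewrite inE; apply/eqP; rewrite -{1}(nth_index v hw).
case: (index v (Q k) =P 0) => h0 /=.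
  by congr nth; slia.
case: (qend hv hp) => h1; first by case: h0.
congr nth; slia.
Qed.

Lemma deg3 (W' : {set T}) v : degV Hr W' v <= 3.
Proof.
rewrite /degV; apply: leq_trans (nbl_size v); apply: leq_trans (card_size (nbl v)).
apply: subset_leq_card; apply/subsetP => w; rewrite inE => /andP [_ h]; exact: nbl_mem h.
Qed.

Lemma avoid (S : {set T}) : 2 + 3 * #|S| <= l ->
  exists c, is_cycle Hr c /\ (forall v, v \in c -> v \notin S).
Proof.
move=> hl.
have hrem := DremS Hr_sym deg3 (erefl #|Vset :&: S|).
have hD := D_ge; have hV := V_le; have hLW := size_LW.
have hs1 : #|Vset :&: S| <= #|S| := subset_leq_card (subsetIr _ _).
have hs2 : #|Vset :&: S| <= #|Vset| := subset_leq_card (subsetIl _ _).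
have hVS := cardsD Vset S.
have hV1 : 0 < #|Vset|.
  have [x hx] : exists x, x \in P1 by move: hP1; case: (P1) => // x s _; exists x; rewrite mem_head.
  by rewrite card_gt0; apply/set0Pn; exists x; rewrite inE /Wseq mem_cat hx.
have g1 : 0 < Dp Hr (Vset :\: S) by lia.
have g2 : 2 * #|Vset :\: S| <= Dp Hr (Vset :\: S) by lia.
have [c [hc hsub]] := cycle_exists Hr_sym Hr_irr (erefl #|Vset :\: S|) g1 g2.
by exists c; split => // v /hsub; rewrite inE => /andP [].
Qed.

End Main.

Theorem lemma2p8 (cstar : R) (hc1 : Rle 1 cstar)
  (hEP : erdos_posa_constant cstar)
  (k : nat) (hk : 0 < k)
  (T : finType) (e : rel T) (hG : simple_graph e)
  (P1 P2 : seq T) (hP1 : is_path e P1) (hP2 : is_path e P2)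
  (hP12 : [disjoint P1 & P2])
  (l : nat) (Q : 'I_l -> seq T)
  (hQpath : forall i, is_path e (Q i))
  (hQdisj : forall i j, i != j -> [disjoint Q i & Q j])
  (hQends : forall i, exists x0,
      ((head x0 (Q i) \in P1) && (last x0 (Q i) \in P2)) \/
      ((head x0 (Q i) \in P2) && (last x0 (Q i) \in P1)))
  (hQint : forall i x0 v, v \in Q i -> (v \in P1) || (v \in P2) ->
      v = head x0 (Q i) \/ v = last x0 (Q i))
  (hl : Rle (Rplus 2 (Rmult 3 (Rmult (Rmult cstar (INR k)) (log2 (INR k))))) (INR l)) :
  let H := fun x y => [|| path_edge P1 x y, path_edge P2 x y
                        | [exists i, path_edge (Q i) x y]] in
  exists C : 'I_k -> seq T,
    (forall m, cycle_in e H (C m)) /\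
    (forall m m', m != m' -> [disjoint C m & C m']) /\
    (forall m, exists i j, i != j /\
        cycle_contains_path (C m) (Q i) /\ cycle_contains_path (C m) (Q j)).
Proof.
move=> H.
have hsym := Hr_sym P1 P2 Q.
have hirr := Hr_irr hG hP1 hP2 hQpath.
case: (hEP k hk T (Hr P1 P2 Q) (conj hsym hirr)) => [[C [hC hdis]] | [S [hS hhit]]].
  exists C; split; last split => //.
    move=> m; have hc := hC m.
    have uc : uniq (C m) by case/and3P: hc.
    have h3 : cycle (Hr P1 P2 Q) (C m) by case/and3P: hc.
    split.
      case/and3P: hc => h1 h2 _; apply/and3P; split => //.
      have sr : subrel (Hr P1 P2 Q) e by move=> x y hxy; exact: (@Hr_e T e hG P1 P2 hP1 hP2 l Q hQpath x y hxy).
      exact: (sub_cycle sr h3).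
    move=> x y /(ceP _ _ uc) [] [hx ->]; rewrite /H.
      exact: (next_cycle h3 hx).
    have := next_cycle h3 hx; rewrite hsym; exact.
  move=> m; exact: (@cyc_two T e P1 P2 hP1 hP2 hP12 l Q hQpath hQdisj hQends hQint (C m) (hC m)).
exfalso.
have hR : Rle (INR (2 + 3 * #|S|)) (INR l).
  rewrite plus_INR mult_INR /=.
  have h0 : Rle 0 (INR #|S|) by apply: pos_INR.
  lra.
have hl' : 2 + 3 * #|S| <= l by apply/leP; apply: INR_le.
have [c [hc hav]] := @avoid T e hG P1 P2 hP1 hP2 hP12 l Q hQpath hQdisj hQends hQint S hl'.
have [v hv hvS] := hhit c hc.
by move: (hav v hv); rewrite hvS.
Qed.
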